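(* There exist an argumentation semantics $\sigma$ whose extensions are maximal conflict-free sets (w.r.t. set inclusion) and argumentation frameworks $AF=(AR,Attacks)$, $AF'=(AR',Attacks')$ with $AF\preceq_N AF'$ such that the following statement does NOT hold: if for all $E\in\sigma(AF)$ and all $E'\in\sigma(AF')$ we have $E'\not\subseteq AR$ or $E'=E$, then for all $E\in\sigma(AF)$ and all $E'\in\sigma(AF')$ we have $E\subseteq E'$.
   Context: An argumentation framework is a pair $(AR,Attacks)$ with $AR$ a finite set and $Attacks\subseteq AR\times AR$; $a$ attacks $b$ iff $(a,b)\in Attacks$. A set $S$ is conflict-free iff no element of $S$ attacks an element of $S$. An argumentation semantics $\sigma$ assigns to each argumentation framework a set $\sigma(AF)$ of subsets of $AR$; ''$\sigma$'s extensions are maximal conflict-free sets'' means that for every $AF$, every $E\in\sigma(AF)$ is a $\subseteq$-maximal conflict-free subset of the argument set of $AF$. $AF\preceq_N AF'$ (normal expansion) iff $AR\subseteq AR'$, $Attacks\subseteq Attacks'$ and no $(a,b)\in Attacks'\setminus Attacks$ has both $a,b\in AR$. *)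

(* Defs.v *)
From mathcomp Require Import all_boot.
From mathcomp Require Import finmap.
Set Implicit Arguments. Unset Strict Implicit. Unset Printing Implicit Defensive.
Local Open Scope fset_scope.

Record AF := mkAF {
  AR : {fset nat};
  Attacks : {fset (nat * nat)};
  Attacks_wf : forall a b, (a, b) \in Attacks -> (a \in AR) && (b \in AR)
}.

Definition attacks (F : AF) (a b : nat) : bool := (a, b) \in Attacks F.

Definition conflict_free (F : AF) (S : {fset nat}) : Prop :=
  forall a b, a \in S -> b \in S -> ~~ attacks F a b.

Definition maximal_conflict_free (F : AF) (S : {fset nat}) : Prop :=
  S `<=` AR F /\ conflict_free F S /\
  forall T : {fset nat}, T `<=` AR F -> conflict_free F T -> S `<=` T -> T = S.

Definition semantics := AF -> {fset nat} -> Prop.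

Definition extensions_maximal_cf (sigma : semantics) : Prop :=
  forall F E, sigma F E -> maximal_conflict_free F E.

Definition normal_expansion (F F' : AF) : Prop :=
  AR F `<=` AR F' /\ Attacks F `<=` Attacks F' /\
  forall a b, (a, b) \in Attacks F' -> (a, b) \notin Attacks F ->
    ~ ((a \in AR F) && (b \in AR F)).

(* Main.v *)
Require Import Defs.
From mathcomp Require Import all_boot.
From mathcomp Require Import finmap.
Local Open Scope fset_scope.

Lemma wf1 : forall a b, (a, b) \in (fset0 : {fset nat * nat}) ->
  (a \in [fset 1%N]) && (b \in [fset 1%N]).
Proof. by move=> a b; rewrite in_fset0. Qed.

Lemma wf2 : forall a b, (a, b) \in [fset (2%N, 1%N)] ->
  (a \in [fset 1%N; 2%N]) && (b \in [fset 1%N; 2%N]).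
Proof. by move=> a b; rewrite in_fset1 => /eqP [-> ->]; rewrite !inE. Qed.

Definition F1 := mkAF wf1.
Definition F2 := mkAF wf2.

Definition sig0 : semantics := fun G E =>
  (AR G = [fset 1%N] /\ Attacks G = fset0 /\ E = [fset 1%N]) \/
  (AR G = [fset 1%N; 2%N] /\ Attacks G = [fset (2%N, 1%N)] /\ E = [fset 2%N]).

Theorem proposition51 :
  exists (sigma : semantics) (F F' : AF),
    extensions_maximal_cf sigma /\ normal_expansion F F' /\
    ~ ((forall E E' : {fset nat}, sigma F E -> sigma F' E' ->
          ~ (E' `<=` AR F) \/ E' = E) ->
       (forall E E' : {fset nat}, sigma F E -> sigma F' E' -> E `<=` E')).
Proof.
exists sig0, F1, F2; split; [|split].
- move=> G E [[hA [hT ->]]|[hA [hT ->]]]; rewrite /maximal_conflict_free hA.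
  + split; first by [].
    split; first by move=> a b _ _; rewrite /attacks hT in_fset0.
    move=> T h1 _ h2; apply/eqP; rewrite eqEfsubset h1 h2 //.
  + split; first by apply/fsubsetP => x; rewrite !inE => ->; rewrite orbT.
    split.
      move=> a b; rewrite /attacks hT !inE => /eqP -> /eqP ->; by [].
    move=> T h1 hcf h2; apply/eqP; rewrite eqEfsubset h2 andbT.
    have h2T : (2%N \in T) by apply: (fsubsetP h2); rewrite inE.
    apply/fsubsetP => x xT.
    have := fsubsetP h1 x xT; rewrite !inE => /orP [/eqP ex|//].
    subst x. have := hcf 2%N 1%N h2T xT. by rewrite /attacks hT inE eqxx.
- split; [|split].
  + apply/fsubsetP => x; rewrite !inE => ->; by [].
  + apply/fsubsetP => x; by rewrite in_fset0.
  + move=> a b; rewrite /= in_fset1 => /eqP [-> ->] _; by rewrite !inE.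
- move=> H.
  have s1 : sig0 F1 [fset 1%N] by left.
  have s2 : sig0 F2 [fset 2%N] by right.
  have P : forall E E' : {fset nat}, sig0 F1 E -> sig0 F2 E' ->
          ~ (E' `<=` AR F1) \/ E' = E.
    move=> E E' _ [[hA _]|[_ [_ ->]]].
      move: hA => /= /eqP; rewrite eqEfsubset => /andP [/fsubsetP /(_ 2%N) + _] ; have m2 : 2%N \in [fset 1%N; 2%N] by rewrite !inE.
      by move=> /(_ m2); rewrite inE.
    left => /fsubsetP /(_ 2%N); rewrite /= !inE => /(_ (eqxx _)).
    done.
  have := H P _ _ s1 s2.
  move=> /fsubsetP /(_ 1%N).
  by rewrite !inE => /(_ (eqxx _)).
Qed.
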